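(* Let $n\in\mathbb{N}$ and $0\leq\delta\leq n-1$, and let $q$ be a prime power with $n\leq q-1$. Put $\mathbb{F}:=\mathbb{F}_q$ and choose $\alpha\in\mathbb{F}$ with $\mathrm{ord}(\alpha)\geq n$. Define \[ G:=\sum_{\nu=0}^{\delta}z^\nu\begin{pmatrix}1&\alpha^\nu&\alpha^{2\nu}&\ldots&\alpha^{(n-1)\nu}\end{pmatrix}\in\mathbb{F}[z]^{1\times n} \] and $\mathcal{C}:=\mathrm{im}\,G=\{uG\mid u\in\mathbb{F}[z]\}\subseteq\mathbb{F}[z]^n$. Then $G$ is right invertible (so $\mathcal{C}$ is a convolutional code with parameters $(n,1,\delta)$), and $\mathrm{dist}(\mathcal{C})=n(\delta+1)$. In other words, $\mathcal{C}$ is an MDS convolutional code with parameters $(n,1,\delta)$.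
   Context: $\mathrm{ord}(\alpha)$ denotes the multiplicative order of $\alpha$ in $\mathbb{F}^*$. A matrix $G\in\mathbb{F}[z]^{k\times n}$ is right invertible if $G\tilde G=I_k$ for some $\tilde G\in\mathbb{F}[z]^{n\times k}$. A convolutional code with parameters $(n,k,\delta)$ is a submodule $\mathcal{C}=\mathrm{im}\,G=\{uG\mid u\in\mathbb{F}[z]^k\}\subseteq\mathbb{F}[z]^n$ where $G\in\mathbb{F}[z]^{k\times n}$ is right invertible and $\delta$ is the maximum degree of the $k\times k$ minors of $G$ (the overall constraint length). For $v=\sum_{j=0}^N v_jz^j\in\mathbb{F}[z]^n$ with $v_j\in\mathbb{F}^n$, the weight is $\mathrm{wt}(v)=\sum_j\mathrm{wt}(v_j)$ with Hamming weight $\mathrm{wt}(v_j)$, and $\mathrm{dist}(\mathcal{C})=\min\{\mathrm{wt}(v)\mid v\in\mathcal{C},v\neq0\}$. A code with parameters $(n,k,\delta)$ is MDS if its distance equals $(n-k)(\lfloor\delta/k\rfloor+1)+\delta+1$, which for $k=1$ equals $n(\delta+1)$. *)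

(* Defs.v *)
From HB Require Import structures.
From mathcomp Require Import all_boot all_order all_algebra all_fingroup all_field.
Set Implicit Arguments. Unset Strict Implicit. Unset Printing Implicit Defensive.
Import GRing.Theory.
Local Open Scope ring_scope.

Section Conv.
Variable F : fieldType.

Definition Gmat (n delta : nat) (a : F) : 'rV[{poly F}]_n :=
  \sum_(nu < delta.+1) ('X ^+ nu) *: \row_(j < n) ((a ^+ (j * nu)%N)%:P).

Definition right_invertible (k n : nat) (G : 'M[{poly F}]_(k, n)) : Prop :=
  exists Gt : 'M[{poly F}]_(n, k), G *m Gt = 1%:M.

(* overall constraint length for k = 1: maximum degree of the 1x1 minors *)
Definition constraint_length1 (n : nat) (G : 'rV[{poly F}]_n) : nat :=
  (\max_(j < n) (size (G ord0 j)).-1)%N.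

Definition code (k n : nat) (G : 'M[{poly F}]_(k, n)) (v : 'rV[{poly F}]_n) : Prop :=
  exists u : 'rV[{poly F}]_k, v = u *m G.

Definition coefvec (n : nat) (v : 'rV[{poly F}]_n) (j : nat) : 'rV[F]_n :=
  \row_i (v ord0 i)`_j.

Definition hwt (n : nat) (w : 'rV[F]_n) : nat := #|[set i | w ord0 i != 0]|.

Definition wt (n : nat) (v : 'rV[{poly F}]_n) : nat :=
  (\sum_(j < (\max_(i < n) size (v ord0 i))%N) hwt (coefvec v j))%N.

Definition dist_eq (n : nat) (C : 'rV[{poly F}]_n -> Prop) (d : nat) : Prop :=
  (exists v, C v /\ v != 0 /\ wt v = d) /\
  (forall v, C v -> v != 0 -> (d <= wt v)%N).
End Conv.

(* Main.v *)
Require Import Defs.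
From HB Require Import structures.
From mathcomp Require Import all_boot all_order all_algebra all_fingroup all_field all_solvable.
From mathcomp Require Import zify.
Set Implicit Arguments. Unset Strict Implicit. Unset Printing Implicit Defensive.
Import GRing.Theory.
Local Open Scope ring_scope.
Section NatL.
Local Open Scope nat_scope.
Lemma shiftsum (c : nat -> nat) a l : \sum_(a <= t < a + l) c t = \sum_(i < l) c (a + i).
Proof.
rewrite -{1}(add0n a) big_addn (addKn a l) big_mkord; apply: eq_bigr => i _; by rewrite addnC.
Qed.

Lemma subsum (c : nat -> nat) a b K : a <= b -> b <= K ->
  \sum_(a <= t < b) c t <= \sum_(0 <= t < K) c t.
Proof.
move=> ab bK; rewrite (big_cat_nat (leq0n a) (leq_trans ab bK)) /=.
rewrite (big_cat_nat ab bK) /=; lia.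
Qed.

Lemma sum_lb (c : nat -> nat) n d s0 m K :
  d < n -> s0 <= m -> m + d < K ->
  (forall t, (s0 <= t <= s0 + d) || (m <= t <= m + d) ->
     n <= c t + (minn t m - maxn s0 (t - d))) ->
  n * d.+1 <= \sum_(0 <= t < K) c t.
Proof.
move=> dn s0m mK hc.
have [big|small] := ltnP (s0 + d) m.
  have e1 : s0 <= s0 + d.+1 by lia.
  have e2 : s0 + d.+1 <= m by lia.
  have e3 : m <= m + d.+1 by lia.
  have e4 : m + d.+1 <= K by lia.
  rewrite (big_cat_nat (leq0n s0) (leq_trans e1 (leq_trans e2 (leq_trans e3 e4)))) /=.
  rewrite (big_cat_nat e1 (leq_trans e2 (leq_trans e3 e4))) /=.
  rewrite (big_cat_nat e2 (leq_trans e3 e4)) /=.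
  rewrite (big_cat_nat e3 e4) /= !shiftsum.
  suff : n * d.+1 <= \sum_(i < d.+1) c (s0 + i) + \sum_(i < d.+1) c (m + i) by lia.
  rewrite -big_split /=.
  have -> : n * d.+1 = \sum_(i < d.+1) n by rewrite sum_nat_const card_ord mulnC.
  apply: leq_sum => i _.
  have := ltn_ord i => hi.
  have := hc (s0 + i) ltac:(lia); have := hc (m + i) ltac:(lia); lia.
pose M := m - s0.
have e1 : s0 <= s0 + M by lia.
have e2 : s0 + M <= s0 + d.+1 by lia.
have e3 : s0 + d.+1 <= s0 + d.+1 + M by lia.
have e4 : s0 + d.+1 + M <= K by lia.
rewrite (big_cat_nat (leq0n s0) (leq_trans e1 (leq_trans e2 (leq_trans e3 e4)))) /=.
rewrite (big_cat_nat e1 (leq_trans e2 (leq_trans e3 e4))) /=.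
rewrite (big_cat_nat e2 (leq_trans e3 e4)) /=.
rewrite (big_cat_nat e3 e4) /= !shiftsum.
have -> : \sum_(s0 + M <= i < s0 + d.+1) c i = \sum_(i < d.+1 - M) c (s0 + M + i).
  by rewrite -shiftsum (_ : s0 + M + (d.+1 - M) = s0 + d.+1) //; lia.
set A := \sum_(i < M) c (s0 + i).
set B := \sum_(i < M) c (s0 + d.+1 + i).
set C := \sum_(i < _) c (s0 + M + i).
have hAB : M * (2 * n - M + 1) <= A + B.
  rewrite /A /B -big_split /=.
  have -> : M * (2 * n - M + 1) = \sum_(i < M) (2 * n - M + 1) by rewrite sum_nat_const card_ord.
  apply: leq_sum => i _; have := ltn_ord i => hi.
  have := hc (s0 + i) ltac:(lia); have := hc (s0 + d.+1 + i) ltac:(lia); lia.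
have hC : (d.+1 - M) * (n - M) <= C.
  rewrite /C.
  set D := d.+1 - M.
  have -> : D * (n - M) = \sum_(i < D) (n - M) by rewrite sum_nat_const card_ord.
  apply: leq_sum => i _; have := ltn_ord i => hi.
  have := hc (s0 + M + i) ltac:(lia); lia.
suff : n * d.+1 <= M * (2 * n - M + 1) + (d.+1 - M) * (n - M) by lia.
have hM : M <= d by lia.
move: hM dn; clear; move: M => M hM dn.
have [e de] : exists e, d = e + M by exists (d - M); lia.
have [f nf] : exists f, n = d.+1 + f by exists (n - d.+1); lia.
subst d n.
have -> : (e + M).+1 - M = e.+1 by lia.
have -> : 2 * ((e + M).+1 + f) - M + 1 = M + 2 * e + 2 * f + 3 by lia.
have -> : (e + M).+1 + f - M = e + f + 1 by lia.
nia.
Qed.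

End NatL.

Section Work.
Variable F : fieldType.
Variables (n delta : nat) (a : F).
Hypothesis a0 : a != 0.
Hypothesis ainj : forall i j : nat, (i < n)%N -> (j < n)%N -> a ^+ i = a ^+ j -> i = j.
Hypothesis dn : (delta < n)%N.

Lemma Gentry (i : 'I_n) : Gmat n delta a ord0 i = \poly_(k < delta.+1) (a ^+ i) ^+ k.
Proof.
rewrite /Gmat summxE poly_def; apply: eq_bigr => nu _.
by rewrite !mxE -mul_polyC mulrC exprM.
Qed.

Lemma Gcoef (i : 'I_n) k : (Gmat n delta a ord0 i)`_k = if (k < delta.+1)%N then (a ^+ i) ^+ k else 0.
Proof. by rewrite Gentry coef_poly. Qed.

Lemma Gsize (i : 'I_n) : size (Gmat n delta a ord0 i) = delta.+1.
Proof. by rewrite Gentry size_poly_eq // !expf_neq0. Qed.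


Definition Wm : 'M[F]_(delta.+1) := Vandermonde delta.+1 (\row_(j < delta.+1) a ^+ j).

Lemma Wunit : Wm \in unitmx.
Proof.
rewrite unitmxE unitfE det_Vandermonde.
rewrite prodf_seq_neq0; apply/allP => i _; apply/implyP => _.
rewrite prodf_seq_neq0; apply/allP => j _; apply/implyP => ij.
rewrite !mxE subr_eq0; apply/eqP => /ainj.
have := ltn_ord i; have := ltn_ord j => hj hi.
move=> h; have := h (leq_trans hj dn) (leq_trans hi dn) => e.
by move: ij; rewrite e ltnn.
Qed.

Lemma rinv : right_invertible (Gmat n delta a).
Proof.
pose c : 'cV[F]_(delta.+1) := invmx Wm *m delta_mx 0 0.
have Wc : Wm *m c = delta_mx 0 0 by rewrite mulmxA mulmxV ?Wunit // mul1mx.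
exists (\matrix_(j < n, k < 1) (if (j < delta.+1)%N then c (inord j) 0 else 0)%:P).
apply/matrixP => i0 j0; rewrite !ord1 !mxE /=.
apply/polyP => k; rewrite coef_sum coefC.
under eq_bigr => j _ do rewrite mxE coefMC Gcoef.
case: ltnP => hk; last first.
  by rewrite big1 ?(gtn_eqF (leq_trans _ hk)) // => j _; rewrite mul0r.
pose f (j : nat) := (a ^+ j) ^+ k * (if (j < delta.+1)%N then c (inord j) 0 else 0).
transitivity (\sum_(j < n) f j); first by apply: eq_bigr.
have -> : \sum_(j < n) f j = \sum_(j < n | (j < delta.+1)%N) f j.
  rewrite [RHS]big_mkcond /=; apply: eq_bigr => j _; rewrite /f; case: ifP => //.
  by rewrite mulr0.
rewrite -(big_ord_widen _ f dn).
have := congr1 (fun M : 'cV[F]_(delta.+1) => M (Ordinal hk) ord0) Wc; rewrite !mxE /= andbT. have -> : (Ordinal hk == 0) = (k == 0%N) by []. have -> : (if k == 0%N then 1 else 0) = (k == 0%N)%:R :> F by case: (k == 0%N). move=> <-.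
apply: eq_bigr => j _; rewrite /f /= ltn_ord !mxE inord_val exprAC.
by [].
Qed.

Lemma n0 : (0 < n)%N. Proof. exact: leq_ltn_trans dn. Qed.

Lemma maxsizeG : (\max_(i < n) size (Gmat n delta a ord0 i))%N = delta.+1.
Proof.
apply/eqP; rewrite eqn_leq; apply/andP; split.
  by apply/bigmax_leqP => i _; rewrite Gsize.
by rewrite -(Gsize (Ordinal n0)) (leq_bigmax (Ordinal n0)).
Qed.

Lemma clen : constraint_length1 (Gmat n delta a) = delta.
Proof.
rewrite /constraint_length1; apply/eqP; rewrite eqn_leq; apply/andP; split.
  by apply/bigmax_leqP => i _; rewrite Gsize.
have := @leq_bigmax _ (fun i : 'I_n => (size (Gmat n delta a ord0 i)).-1) (Ordinal n0).
by rewrite /= Gsize.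
Qed.

Lemma wtG : wt (Gmat n delta a) = (n * delta.+1)%N.
Proof.
rewrite /wt maxsizeG.
transitivity (\sum_(t < delta.+1) n)%N; last by rewrite sum_nat_const card_ord mulnC.
apply: eq_bigr => t _; rewrite /hwt.
rewrite -[RHS](card_ord n); apply: eq_card => i.
by rewrite !inE mxE Gcoef ltn_ord !expf_neq0.
Qed.

Lemma G_neq0 : Gmat n delta a != 0.
Proof.
apply/eqP => /matrixP /(_ ord0 (Ordinal n0)) /eqP; rewrite mxE -size_poly_eq0 Gsize.
by [].
Qed.

Definition cnt (p : {poly F}) t := #|[set i : 'I_n | (p * Gmat n delta a ord0 i)`_t != 0]|.
Section Window.
Variables (p : {poly F}) (s0 m : nat).
Hypotheses (ps0 : p`_s0 != 0) (pm : p`_m != 0) (s0m : (s0 <= m)%N)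
  (plo : forall s, (s < s0)%N -> p`_s = 0) (phi : forall s, (m < s)%N -> p`_s = 0).

Lemma window t : ((s0 <= t <= s0 + delta) || (m <= t <= m + delta))%N ->
  (n <= cnt p t + (minn t m - maxn s0 (t - delta)))%N.
Proof.
move=> ht.
set H := minn t m; set L := maxn s0 (t - delta).
pose Q := \poly_(r < t.+1) (p`_(t - r) * (r < delta.+1)%:R).
have QE (i : 'I_n) : (p * Gmat n delta a ord0 i)`_t = Q.[a ^+ i].
  rewrite coefMr horner_poly; apply: eq_bigr => r _; rewrite Gcoef.
  by case: ifP => _; rewrite ?mulr1 ?mulr0 ?mul0r.
set k := (t - H)%N.
have Qlo r : (r < k)%N -> Q`_r = 0.
  move=> hr; rewrite coef_poly; case: ifP => // _.
  by rewrite phi ?mul0r //; rewrite /k /H in hr *; lia.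
pose Q' := drop_poly k Q.
have QQ : Q = Q' * 'X^k.
  rewrite -{1}(poly_take_drop k Q); have -> : take_poly k Q = 0; last by rewrite add0r.
  by apply/polyP => r; rewrite coef_take_poly coef0; case: ifP => // /Qlo.
have szQ : (size Q <= t - L + 1)%N.
  apply/leq_sizeP => j hj; rewrite coef_poly; case: ifP => // hjt.
  have [hs|hs] := ltnP (t - j) s0; first by rewrite plo ?mul0r.
  have -> : (j < delta.+1)%N = false by rewrite /L in hj; apply/negbTE; rewrite -leqNgt; lia.
  by rewrite mulr0.
have szQ' : (size Q' <= H - L + 1)%N.
  rewrite size_drop_poly; rewrite /k /H /L in szQ *; lia.
have Q'0 : Q' != 0.
  have [r0 [kr0 Qr0]] : exists r0, (k <= r0)%N /\ Q`_r0 != 0.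
    case/orP: ht => /andP [h1 h2].
      exists (t - s0)%N; split; first by rewrite /k /H; lia.
      rewrite coef_poly (_ : (t - s0 < t.+1)%N = true); last by lia.
      rewrite (_ : (t - s0 < delta.+1)%N = true); last by lia.
      by rewrite mulr1 (_ : (t - (t - s0))%N = s0) //; lia.
    exists (t - m)%N; split; first by rewrite /k /H; lia.
    rewrite coef_poly (_ : (t - m < t.+1)%N = true); last by lia.
    rewrite (_ : (t - m < delta.+1)%N = true); last by lia.
    by rewrite mulr1 (_ : (t - (t - m))%N = m) //; lia.
  apply: contra Qr0 => /eqP Q'0; apply/eqP.
  by rewrite -(subnK kr0) -coef_drop_poly -/Q' Q'0 coef0.
set Z := [set i : 'I_n | (p * Gmat n delta a ord0 i)`_t == 0].
have cZ : #|[set i : 'I_n | (p * Gmat n delta a ord0 i)`_t != 0]| = #|~: Z|.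
  by apply: eq_card => i; rewrite !inE.
have hZ : (#|Z| < size Q')%N.
  rewrite cardE -(size_map (fun i : 'I_n => a ^+ i)).
  apply: max_poly_roots => //.
    apply/allP => x /mapP [i iZ ->]; move: iZ; rewrite mem_enum inE QE QQ hornerM hornerXn.
    by rewrite mulf_eq0 expf_eq0 expf_eq0 (negbTE a0) !andbF orbF.
  rewrite map_inj_in_uniq ?enum_uniq // => i j _ _ /ainj e.
  by apply: val_inj; apply: e.
have := cardsC Z; rewrite card_ord /cnt cZ; lia.
Qed.
End Window.

Lemma tailsum (c : nat -> nat) N K : (N <= K)%N -> (forall t, (N <= t)%N -> c t = 0%N) ->
  (\sum_(t < N) c t)%N = (\sum_(0 <= t < K) c t)%N.
Proof.
move=> NK h; rewrite (big_cat_nat (leq0n N) NK) /= big_mkord.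
rewrite [X in _ = (_ + X)%N]big_nat_cond [X in _ = (_ + X)%N]big1 ?addn0 // => t /andP [/andP [ht _] _].
exact: h.
Qed.

Lemma lower (v : 'rV[{poly F}]_n) : code (Gmat n delta a) v -> v != 0 ->
  (n * delta.+1 <= wt v)%N.
Proof.
move=> [u ->] vn0.
set p := u ord0 ord0.
have vE i : (u *m Gmat n delta a) ord0 i = p * Gmat n delta a ord0 i.
  by rewrite mxE big_ord1.
have p0 : p != 0.
  apply: contra vn0 => /eqP p0; apply/eqP/matrixP => i j.
  by rewrite ord1 vE p0 mul0r mxE.
have exP : exists k, p`_k != 0 by exists (size p).-1; rewrite -lead_coefE lead_coef_eq0.
case: (ex_minnP exP) => s0 ps0 mins0.
set m := (size p).-1.
have pm : p`_m != 0 by rewrite -lead_coefE lead_coef_eq0.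
have s0m : (s0 <= m)%N by apply: mins0.
have plo s : (s < s0)%N -> p`_s = 0.
  move=> hs; apply/eqP; apply: contraTT hs => /mins0; by rewrite -leqNgt.
have phi s : (m < s)%N -> p`_s = 0.
  move=> hs; apply: nth_default; rewrite /m in hs; have sp : (0 < size p)%N by rewrite size_poly_gt0.
  by rewrite -(prednK sp).
rewrite /wt.
set N := (\max_(i < n) size ((u *m Gmat n delta a) ord0 i))%N.
rewrite (tailsum (c := fun t => hwt (coefvec (u *m Gmat n delta a) t)) (K := maxn N (m + delta).+1)).
- apply: (sum_lb (s0 := s0) (m := m)) => //.
    by rewrite leq_max ltnSn orbT.
  move=> t ht; have := window ps0 pm s0m plo phi ht.
  rewrite /cnt /hwt; congr (_ <= _ + _)%N; apply: eq_card => i; rewrite !inE mxE vE //.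
- exact: leq_maxl.
- move=> t ht; rewrite /hwt; apply/eqP; rewrite cards_eq0; apply/eqP/setP => i.
  rewrite !inE mxE nth_default ?eqxx //.
  apply: leq_trans ht; exact: (@leq_bigmax _ (fun i : 'I_n => size ((u *m Gmat n delta a) ord0 i)) i).
Qed.

Lemma distG : dist_eq (code (Gmat n delta a)) (n * delta.+1).
Proof.
split; last exact: lower.
exists (Gmat n delta a); split; first by exists 1%:M; rewrite mul1mx.
by split; [exact: G_neq0 | exact: wtG].
Qed.
End Work.

Unset Implicit Arguments.
Theorem theorem2p1 (F : finFieldType) (n delta : nat) (a : {unit F}) :
  (delta < n)%N -> (n <= #|F|.-1)%N -> (n <= #[a]%g)%N ->
  [/\ right_invertible (Gmat n delta (val a)),
      constraint_length1 (Gmat n delta (val a)) = delta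
    & dist_eq (code (Gmat n delta (val a))) (n * delta.+1)%N].
Proof.
move=> dn _ na.
have a0 : val a != 0 by rewrite -unitfE; exact: valP.
have ainj : forall i j : nat, (i < n)%N -> (j < n)%N -> val a ^+ i = val a ^+ j -> i = j.
  move=> i j hi hj; rewrite -!FinRing.val_unitX => /val_inj /eqP.
  rewrite eq_expg_mod_order !modn_small ?(leq_trans hi na) ?(leq_trans hj na) //.
  by move/eqP.
split; first exact: rinv.
  exact: clen.
exact: distG.
Qed.
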